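(* Let $P,Q\in\mathbb P_d$ and let $R=\gamma^{\mathrm{BW}}_{PQ}(t)$ for some $t\in[0,1]$. Then $\operatorname{F}_R(P,Q)=\operatorname{F}^{\mathrm U}(P,Q)$.
   Context: $\mathbb P_d$ is the set of $d\times d$ complex positive definite matrices; $A\#B:=A^{1/2}(A^{-1/2}BA^{-1/2})^{1/2}A^{1/2}$ is the matrix geometric mean. The Bures–Wasserstein geodesic between $A,B\in\mathbb P_d$ is $\gamma^{\mathrm{BW}}_{AB}(t):=[(1-t)\mathbb I+t\,A^{-1}\#B]\,A\,[(1-t)\mathbb I+t\,A^{-1}\#B]$, $t\in[0,1]$. The generalized fidelity is $\operatorname{F}_R(P,Q):=\operatorname{Tr}\big[\sqrt{R^{1/2}PR^{1/2}}\,R^{-1}\sqrt{R^{1/2}QR^{1/2}}\big]$, and the Uhlmann fidelity is $\operatorname{F}^{\mathrm U}(P,Q):=\operatorname{Tr}\sqrt{P^{1/2}QP^{1/2}}$. *)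

(* Defs.v *)
From HB Require Import structures.
From mathcomp Require Import all_boot all_order all_algebra.
From mathcomp Require Import complex.
From Stdlib Require Import ClassicalEpsilon.
Set Implicit Arguments. Unset Strict Implicit. Unset Printing Implicit Defensive.
Import Order.TTheory GRing.Theory Num.Theory.
Local Open Scope ring_scope.

Section Defs.
Variable R : rcfType.
Local Notation C := R[i].
Variable d : nat.

Definition adjmx (A : 'M[C]_d) : 'M[C]_d := (map_mx Num.conj A)^T.

Definition hermitian (A : 'M[C]_d) : Prop := adjmx A = A.

Definition psdmx (A : 'M[C]_d) : Prop :=
  hermitian A /\
  forall v : 'cV[C]_d, 0 <= ((map_mx Num.conj v)^T *m A *m v) ord0 ord0.

Definition pdmx (A : 'M[C]_d) : Prop :=
  hermitian A /\
  forall v : 'cV[C]_d, v != 0 -> 0 < ((map_mx Num.conj v)^T *m A *m v) ord0 ord0.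

(* the (unique) positive semidefinite square root of A, when A is PSD;
   chosen by classical description (an arbitrary matrix otherwise). *)
Definition sqrtmx (A : 'M[C]_d) : 'M[C]_d :=
  epsilon (inhabits 0) (fun S => psdmx S /\ S *m S = A).

Definition isqrtmx (A : 'M[C]_d) : 'M[C]_d := invmx (sqrtmx A).

Definition gmean (A B : 'M[C]_d) : 'M[C]_d :=
  sqrtmx A *m sqrtmx (isqrtmx A *m B *m isqrtmx A) *m sqrtmx A.

Definition bw_geodesic (A B : 'M[C]_d) (t : R) : 'M[C]_d :=
  let M := (1 - (t%:C)%C) *: 1%:M + (t%:C)%C *: gmean (invmx A) B in
  M *m A *m M.

Definition gen_fidelity (Rm P Q : 'M[C]_d) : C :=
  \tr (sqrtmx (sqrtmx Rm *m P *m sqrtmx Rm) *m invmx Rm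
       *m sqrtmx (sqrtmx Rm *m Q *m sqrtmx Rm)).

Definition uhlmann_fidelity (P Q : 'M[C]_d) : C :=
  \tr (sqrtmx (sqrtmx P *m Q *m sqrtmx P)).

End Defs.

(* Main.v *)
Require Import Defs.
From mathcomp Require Import all_boot all_order all_algebra complex sesquilinear spectral.
From Stdlib Require Import ClassicalEpsilon.
Set Implicit Arguments. Unset Strict Implicit. Unset Printing Implicit Defensive.
Import Order.TTheory GRing.Theory Num.Theory.
Local Open Scope ring_scope.

Section Lib.
Variable R : rcfType.
Local Notation C := R[i].

Definition adj {m n} (A : 'M[C]_(m,n)) : 'M[C]_(n,m) := (map_mx Num.conj A)^T.

Lemma adj_mul m n p (A : 'M[C]_(m,n)) (B : 'M[C]_(n,p)) : adj (A *m B) = adj B *m adj A.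
Proof. by rewrite /adj map_mxM trmx_mul. Qed.

Lemma adjK m n (A : 'M[C]_(m,n)) : adj (adj A) = A.
Proof. by apply/matrixP=> i j; rewrite !mxE conjCK. Qed.

Lemma adjD m n (A B : 'M[C]_(m,n)) : adj (A + B) = adj A + adj B.
Proof. by apply/matrixP=> i j; rewrite !mxE rmorphD. Qed.

Lemma adjN m n (A : 'M[C]_(m,n)) : adj (- A) = - adj A.
Proof. by apply/matrixP=> i j; rewrite !mxE rmorphN. Qed.

Lemma adjZ m n c (A : 'M[C]_(m,n)) : adj (c *: A) = c^* *: adj A.
Proof. by apply/matrixP=> i j; rewrite !mxE rmorphM. Qed.

Lemma adj_scalar n c : adj (c%:M : 'M[C]_n) = (c^*)%:M.
Proof. by apply/matrixP=> i j; rewrite !mxE rmorphMn eq_sym. Qed.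

Lemma adj1 n : adj (1%:M : 'M[C]_n) = 1%:M.
Proof. by rewrite adj_scalar rmorph1. Qed.

Lemma adj0 m n : adj (0 : 'M[C]_(m,n)) = 0.
Proof. by apply/matrixP=> i j; rewrite !mxE rmorph0. Qed.

Lemma adj_inv n (A : 'M[C]_n) : adj (invmx A) = invmx (adj A).
Proof. by rewrite /adj (map_invmx Num.conj) trmx_inv. Qed.

Lemma adjmxE n (A : 'M[C]_n) : adjmx A = adj A.
Proof. by []. Qed.

Lemma adj_unit n (A : 'M[C]_n) : (adj A \in unitmx) = (A \in unitmx).
Proof. by rewrite /adj unitmx_tr map_unitmx. Qed.


Definition qf n (A : 'M[C]_n) (v : 'cV[C]_n) : C := (adj v *m A *m v) 0 0.

Lemma psdE n (A : 'M[C]_n) : psdmx A <-> (adj A = A /\ forall v, 0 <= qf A v).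
Proof. by []. Qed.
Lemma pdE n (A : 'M[C]_n) : pdmx A <-> (adj A = A /\ forall v, v != 0 -> 0 < qf A v).
Proof. by []. Qed.

Lemma norm_ge0 n (u : 'cV[C]_n) : 0 <= (adj u *m u) 0 0.
Proof.
rewrite !mxE; apply: sumr_ge0 => j _; rewrite !mxE mulrC; exact: mul_conjC_ge0.
Qed.

Lemma norm_eq0 n (u : 'cV[C]_n) : (adj u *m u) 0 0 = 0 -> u = 0.
Proof.
rewrite !mxE => /psumr_eq0P H; apply/matrixP => j k; rewrite ord1 mxE.
have H0 : forall i : 'I_n, true -> 0 <= adj u 0 i * u i 0.
  by move=> i _; rewrite !mxE mulrC mul_conjC_ge0.
have /eqP := H H0 j isT; rewrite !mxE mulf_eq0 conjC_eq0 orbb.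
by move/eqP.
Qed.

Lemma norm_gt0 n (u : 'cV[C]_n) : u != 0 -> 0 < (adj u *m u) 0 0.
Proof.
move=> un; rewrite lt_def norm_ge0 andbT; apply/eqP => /norm_eq0 h.
by rewrite h eqxx in un.
Qed.

Lemma qf_congr n (A X : 'M[C]_n) v : qf (adj X *m A *m X) v = qf A (X *m v).
Proof. by rewrite /qf adj_mul !mulmxA. Qed.

Lemma herm_congr n (A X : 'M[C]_n) : adj A = A -> adj (adj X *m A *m X) = adj X *m A *m X.
Proof. by move=> h; rewrite !adj_mul adjK h mulmxA. Qed.

Lemma psd_congr n (A X : 'M[C]_n) : psdmx A -> psdmx (adj X *m A *m X).
Proof.
move=> [h q]; split; first exact: herm_congr.
by move=> v; rewrite -/(qf _ _) qf_congr; apply: q.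
Qed.

Lemma pd_congr n (A X : 'M[C]_n) : pdmx A -> X \in unitmx -> pdmx (adj X *m A *m X).
Proof.
move=> [h q] Xu; split; first exact: herm_congr.
move=> v vn; rewrite -/(qf _ _) qf_congr; apply: q.
apply: contra vn => /eqP e; apply/eqP.
by rewrite -(mulKmx Xu v) e mulmx0.
Qed.

Lemma pd_psd n (A : 'M[C]_n) : pdmx A -> psdmx A.
Proof.
move=> [h q]; split => // v; have [->|vn] := eqVneq v 0.
  by rewrite /qf mulmx0 mxE.
exact/ltW/q.
Qed.

Lemma pd_unit n (A : 'M[C]_n) : pdmx A -> A \in unitmx.
Proof.
move=> [h q]; rewrite -unitmx_tr -row_free_unit; apply: inj_row_free => v vA.
apply/trmx_inj; rewrite trmx0; apply/eqP; apply: contraT => vn.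
have e : A *m v^T = 0 by rewrite -[A]trmxK -trmx_mul vA trmx0.
have := q _ vn; rewrite /qf -mulmxA e mulmx0 mxE.
by rewrite ltxx.
Qed.

Lemma psd_add n (A B : 'M[C]_n) : psdmx A -> psdmx B -> psdmx (A + B).
Proof.
move=> /psdE[ha qa] /psdE[hb qb]; apply/psdE; split; first by rewrite adjD ha hb.
by move=> v; rewrite /qf mulmxDr mulmxDl mxE addr_ge0 //; [apply: qa|apply: qb].
Qed.

Lemma pd_add n (A B : 'M[C]_n) : pdmx A -> psdmx B -> pdmx (A + B).
Proof.
move=> /pdE[ha qa] /psdE[hb qb]; apply/pdE; split; first by rewrite adjD ha hb.
by move=> v vn; rewrite /qf mulmxDr mulmxDl mxE ltr_wpDr //; [apply: qb|apply: qa].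
Qed.

Lemma psd_scale n c (A : 'M[C]_n) : 0 <= c -> psdmx A -> psdmx (c *: A).
Proof.
move=> c0 /psdE[h q]; apply/psdE; split; first by rewrite adjZ h geC0_conj.
by move=> v; rewrite /qf -scalemxAr -scalemxAl mxE mulr_ge0 //; apply: q.
Qed.

Lemma pd_scale n c (A : 'M[C]_n) : 0 < c -> pdmx A -> pdmx (c *: A).
Proof.
move=> c0 /pdE[h q]; apply/pdE; split; first by rewrite adjZ h geC0_conj // ltW.
by move=> v vn; rewrite /qf -scalemxAr -scalemxAl mxE mulr_gt0 //; apply: q.
Qed.

Lemma pd1 n : pdmx (1%:M : 'M[C]_n).
Proof.
apply/pdE; split; first exact: adj1.
by move=> v vn; rewrite /qf mulmx1; apply: norm_gt0.
Qed.


Lemma tstarE m n (A : 'M[C]_(m,n)) : map_mx Num.conj A^T = adj A.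
Proof. by apply/matrixP=> i j; rewrite !mxE. Qed.

Lemma spectral_herm n (A : 'M[C]_n) : adj A = A ->
  exists V (s : 'rV[C]_n), [/\ V *m adj V = 1%:M, adj V *m V = 1%:M &
     A = adj V *m diag_mx s *m V].
Proof.
move=> h.
have nA : A \is normalmx by apply/normalmxP; rewrite tstarE h.
have /orthomx_spectralP eA := nA.
have U := spectral_unitarymx A.
have Vu := unitarymx_unit U.
have iV : invmx (spectralmx A) = adj (spectralmx A) by rewrite invmx_unitary // tstarE.
exists (spectralmx A), (spectral_diag A); split.
- by rewrite -iV mulmxV.
- by rewrite -iV mulVmx.
- by rewrite -iV.
Qed.

Lemma delta_adj n (i : 'I_n) : adj (delta_mx i 0 : 'cV[C]_n) = delta_mx 0 i.
Proof.
apply/matrixP=> a b; rewrite !mxE; case: (a == 0) => //=; case: (b == i);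
by rewrite /= ?rmorph1 ?rmorph0.
Qed.

Lemma diag_delta n (s : 'rV[C]_n) (i : 'I_n) :
  diag_mx s *m (delta_mx i 0 : 'cV[C]_n) = s 0 i *: delta_mx i 0.
Proof.
apply/matrixP=> a b; rewrite mul_diag_mx !mxE; have [->|ne] := eqVneq a i.
  by [].
by rewrite /= !mulr0.
Qed.

Lemma qf_diag_delta n (V : 'M[C]_n) (s : 'rV[C]_n) (i : 'I_n) :
  V *m adj V = 1%:M ->
  qf (adj V *m diag_mx s *m V) (adj V *m delta_mx i 0) = s 0 i.
Proof.
move=> VV; rewrite qf_congr mulmxA VV mul1mx /qf -mulmxA diag_delta -scalemxAr.
by rewrite delta_adj mul_delta_mx mxE mxE !eqxx mulr1.
Qed.

Lemma psd_eig n (A V : 'M[C]_n) s : psdmx A -> V *m adj V = 1%:M ->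
  A = adj V *m diag_mx s *m V -> forall i, 0 <= s 0 i.
Proof.
move=> /psdE[_ q] VV eA i; rewrite -(qf_diag_delta s i VV) -eA; exact: q.
Qed.

Lemma pd_eig n (A V : 'M[C]_n) s : pdmx A -> V *m adj V = 1%:M ->
  A = adj V *m diag_mx s *m V -> forall i, 0 < s 0 i.
Proof.
move=> /pdE[_ q] VV eA i; rewrite -(qf_diag_delta s i VV) -eA; apply: q.
apply/eqP => /(congr1 (mulmx V)); rewrite mulmxA VV mul1mx mulmx0 => /matrixP/(_ i 0).
by rewrite !mxE !eqxx /= => /eqP; rewrite oner_eq0.
Qed.

Lemma psd_diag n (x : 'rV[C]_n) : (forall i, 0 <= x 0 i) -> psdmx (diag_mx x).
Proof.
move=> x0; apply/psdE; split.
  apply/matrixP=> a b; rewrite !mxE; have [->|ne] := eqVneq b a.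
    by rewrite !mulr1n geC0_conj.
  by rewrite !mulr0n rmorph0.
move=> v; rewrite /qf mul_mx_diag mxE; apply: sumr_ge0 => j _; rewrite !mxE.
by rewrite mulrAC mulr_ge0 // mulrC mul_conjC_ge0.
Qed.

Lemma sqrt_exists n (A : 'M[C]_n) : psdmx A -> exists S, psdmx S /\ S *m S = A.
Proof.
move=> Ap; have [V [s [VV VV' eA]]] := spectral_herm (proj1 Ap).
have s0 := psd_eig Ap VV eA.
exists (adj V *m diag_mx (map_mx sqrtC s) *m V); split.
  apply: psd_congr; apply: psd_diag => i.
  by rewrite mxE sqrtC_ge0.
rewrite eA -!mulmxA; congr (_ *m _); rewrite (mulmxA V) VV mul1mx mulmxA mulmx_diag.
congr (_ *m _); congr diag_mx; apply/rowP => j; by rewrite !mxE -expr2 sqrtCK.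
Qed.


Lemma sqrt_unique n (S T : 'M[C]_n) : psdmx S -> psdmx T -> S *m S = T *m T -> S = T.
Proof.
move=> Sp Tp e.
have [hS qS] := psdE S; have [hT qT] := psdE T.
move: (hS Sp) (hT Tp) => [{}hS {}qS] [{}hT {}qT].
pose D := S - T.
have hD : adj D = D by rewrite /D adjD adjN hS hT.
have [W [mu [WW WW' eD]]] := spectral_herm hD.
suff mu0 : mu = 0.
  apply/eqP; rewrite -subr_eq0 -/D eD mu0.
  have -> : diag_mx (0 : 'rV[C]_n) = 0 by apply/matrixP=> a b; rewrite !mxE mul0rn.
  by rewrite mulmx0 mul0mx.
apply/rowP => i; rewrite mxE.
pose v := adj W *m (delta_mx i 0 : 'cV[C]_n).
have Dv : D *m v = mu 0 i *: v.
  rewrite eD /v !mulmxA -(mulmxA _ W) WW mulmx1 -mulmxA diag_delta scalemxAr //.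
have vv : (adj v *m v) 0 0 = 1.
  rewrite /v adj_mul adjK mulmxA -(mulmxA _ W) WW mulmx1 delta_adj mul_delta_mx.
  by rewrite mxE !eqxx.
pose a := qf S v; pose b := qf T v.
have a0 : 0 <= a by apply: qS.
have b0 : 0 <= b by apply: qT.
have mua : mu 0 i = a - b.
  rewrite -[mu 0 i]mulr1 -vv.
  have -> : mu 0 i * (adj v *m v) 0 0 = (adj v *m (mu 0 i *: v)) 0 0.
    by rewrite -scalemxAr [in RHS]mxE.
  rewrite -[mu 0 i *: v]Dv mulmxA /D mulmxBr mulmxBl.
  have mB : forall X Y : 'M[C]_1, (X - Y) 0 0 = X 0 0 - Y 0 0 by move=> X Y; rewrite !mxE.
  by rewrite mB.
have muc : (mu 0 i)^* = mu 0 i.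
  by rewrite mua rmorphB /= (geC0_conj a0) (geC0_conj b0).
have key : 0 = mu 0 i * a + (mu 0 i)^* * b.
  have E : S *m S - T *m T = S *m D + D *m T.
    by rewrite /D mulmxBr mulmxBl addrA subrK.
  have : (adj v *m (S *m S - T *m T) *m v) 0 0 = 0.
    by rewrite e subrr mulmx0 mul0mx mxE.
  rewrite E mulmxDr mulmxDl mxE => <-.
  have h2 : adj v *m D = (mu 0 i)^* *: adj v by rewrite -{1}hD -adj_mul Dv adjZ.
  have t1 : (adj v *m (S *m D) *m v) 0 0 = mu 0 i * a.
    by rewrite mulmxA -mulmxA Dv -scalemxAr mxE.
  have t2 : (adj v *m (D *m T) *m v) 0 0 = (mu 0 i)^* * b.
    by rewrite mulmxA h2 -!scalemxAl mxE.
  by rewrite t1 t2.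
move: key; rewrite muc -mulrDr mua => /esym/eqP; rewrite mulf_eq0.
case/orP => [/eqP //|]; rewrite paddr_eq0 // => /andP[/eqP-> /eqP->].
by rewrite subrr.
Qed.


Lemma sqrtmx_spec n (A : 'M[C]_n) : psdmx A -> psdmx (sqrtmx A) /\ sqrtmx A *m sqrtmx A = A.
Proof.
move=> Ap; exact: (@epsilon_spec _ (inhabits 0) (fun S : 'M[C]_n => psdmx S /\ S *m S = A) (sqrt_exists Ap)).
Qed.

Lemma sqrtmx_eq n (A S : 'M[C]_n) : psdmx S -> S *m S = A -> sqrtmx A = S.
Proof.
move=> Sp SS; have Ap : psdmx A.
  rewrite -SS -[S in S *m _](proj1 Sp) -[S in _ *m S]mul1mx mulmxA.
  exact/psd_congr/pd_psd/pd1.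
have [sp ss] := sqrtmx_spec Ap; apply: sqrt_unique => //; by rewrite ss.
Qed.

Lemma inv_eq n (A B : 'M[C]_n) : A \in unitmx -> A *m B = 1%:M -> invmx A = B.
Proof. by move=> Au AB; rewrite -[LHS]mulmx1 -AB mulmxA mulVmx // mul1mx. Qed.

Lemma psd_unit_pd n (A : 'M[C]_n) : psdmx A -> A \in unitmx -> pdmx A.
Proof.
move=> Ap Au; have [sp ss] := sqrtmx_spec Ap.
have hs : adj (sqrtmx A) = sqrtmx A := proj1 sp.
apply/pdE; split; first exact: (proj1 Ap).
move=> v vn; rewrite lt_def (proj2 Ap) andbT; apply: contra vn => /eqP q0.
have : (adj (sqrtmx A *m v) *m (sqrtmx A *m v)) 0 0 = 0.
  by rewrite adj_mul hs !mulmxA -(mulmxA _ _ (sqrtmx A)) ss.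
move/norm_eq0 => e; have Av : A *m v = 0 by rewrite -ss -mulmxA e mulmx0.
by apply/eqP; rewrite -(mulKmx Au v) Av mulmx0.
Qed.

Lemma sqrt_pd n (A : 'M[C]_n) : pdmx A -> pdmx (sqrtmx A).
Proof.
move=> Ap; have [sp ss] := sqrtmx_spec (pd_psd Ap).
apply: psd_unit_pd => //; have := pd_unit Ap; rewrite -{1}ss unitmx_mul.
by case/andP.
Qed.


Lemma main_lemma d (P Q : 'M[C]_d) (t : R) :
  pdmx P -> pdmx Q -> 0 <= t -> t <= 1 ->
  gen_fidelity (bw_geodesic P Q t) P Q = uhlmann_fidelity P Q.
Proof.
move=> Pp Qp t0 t1.
have hP : adj P = P := proj1 Pp.
have Pu := pd_unit Pp.
have [A eA] : {A | invmx P = A} by exists (invmx P).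
have Apd : pdmx A.
  have e : A = adj A *m P *m A by rewrite -eA adj_inv hP mulVmx // mul1mx.
  by rewrite e; apply: pd_congr => //; rewrite -eA unitmx_inv.
have PA : P = invmx A by rewrite -eA invmxK.
have [a ea] : {a | sqrtmx A = a} by exists (sqrtmx A).
have [ap aa] := sqrtmx_spec (pd_psd Apd); rewrite ea in ap aa.
have apd : pdmx a by rewrite -ea; exact: sqrt_pd Apd.
have au : a \in unitmx := pd_unit apd.
have ha : adj a = a := proj1 ap.
have [ai eai] : {ai | invmx a = ai} by exists (invmx a).
have hai : adj ai = ai by rewrite -eai adj_inv ha.
have aiu : ai \in unitmx by rewrite -eai unitmx_inv.
have aV : a *m ai = 1%:M by rewrite -eai mulmxV.
have Va : ai *m a = 1%:M by rewrite -eai mulVmx.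
have Ypd : pdmx (ai *m Q *m ai) by rewrite -{1}hai; apply: pd_congr.
have [X eX] : {X | sqrtmx (ai *m Q *m ai) = X} by exists (sqrtmx (ai *m Q *m ai)).
have [Xp XX] := sqrtmx_spec (pd_psd Ypd); rewrite eX in Xp XX.
have Xpd : pdmx X by rewrite -eX; exact: sqrt_pd Ypd.
have [G eG] : {G | a *m X *m a = G} by exists (a *m X *m a).
have Gpd : pdmx G by rewrite -eG -{1}ha; apply: pd_congr.
have hG : adj G = G := proj1 Gpd.
have gm : gmean (invmx P) Q = G.
  by rewrite /gmean /isqrtmx eA ea eai eX eG.
have aPa : a *m P *m a = 1%:M.
  have -> : P = ai *m ai.
    rewrite PA; apply: inv_eq; rewrite ?pd_unit // -aa mulmxA -(mulmxA a a).
    by rewrite aV mulmx1 aV.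
  by rewrite !mulmxA aV mul1mx Va.
have GPG : G *m P *m G = Q.
  rewrite -eG !mulmxA -(mulmxA _ a P) -(mulmxA _ (a *m P) a) aPa mulmx1.
  rewrite -(mulmxA _ X X) XX !mulmxA aV mul1mx -mulmxA Va.
  by rewrite mulmx1.
have tC0 : 0 <= (t%:C)%C by rewrite -[0]/(0%:C)%C lecR.
have t1C0 : 0 <= 1 - (t%:C)%C by rewrite subr_ge0 -[1]/(1%:C)%C lecR.
have [M eM] : {M | (1 - (t%:C)%C) *: (1%:M : 'M[C]_d) + (t%:C)%C *: G = M} by eexists.
have Mpd : pdmx M.
  rewrite -eM; have [->|tn1] := eqVneq t 1.
    by rewrite -[(1%:C)%C]/(1 : C) subrr scale0r add0r scale1r.
  apply: pd_add; last exact: psd_scale (pd_psd Gpd).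
  apply: pd_scale; last exact: pd1.
  by rewrite subr_gt0 -[1]/(1%:C)%C ltcR lt_def eq_sym tn1.
have hM : adj M = M := proj1 Mpd.
have Mu : M \in unitmx := pd_unit Mpd.
have GM : G *m M = M *m G.
  by rewrite -eM mulmxDr mulmxDl -!scalemxAr -!scalemxAl mulmx1 mul1mx.
have MG : M *m G = (1 - (t%:C)%C) *: G + (t%:C)%C *: (adj G *m 1%:M *m G).
  by rewrite -eM mulmxDl -!scalemxAl mul1mx mulmx1 hG.
have [N eN] : {N | invmx M = N} by exists (invmx M).
have NM : N *m M = 1%:M by rewrite -eN mulVmx.
have MN : M *m N = 1%:M by rewrite -eN mulmxV.
have hN : adj N = N by rewrite -eN adj_inv hM.
have Nu : N \in unitmx by rewrite -eN unitmx_inv.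
have Npd : pdmx N.
  have -> : N = adj N *m M *m N by rewrite hN -mulmxA MN mulmx1.
  exact: pd_congr.
have [Rm eR] : {Rm | M *m P *m M = Rm} by exists (M *m P *m M).
have bw : bw_geodesic P Q t = Rm by rewrite /bw_geodesic gm eM eR.
have Rpd : pdmx Rm by rewrite -eR -{1}hM; apply: pd_congr.
have [r er] : {r | sqrtmx Rm = r} by exists (sqrtmx Rm).
have [rp rr] := sqrtmx_spec (pd_psd Rpd); rewrite er in rp rr.
have ru : r \in unitmx by rewrite -er; exact: pd_unit (sqrt_pd Rpd).
have hr : adj r = r := proj1 rp.
have [ri eri] : {ri | invmx r = ri} by exists (invmx r).
have rV : r *m ri = 1%:M by rewrite -eri mulmxV.
have Vr : ri *m r = 1%:M by rewrite -eri mulVmx.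
have s1 : sqrtmx (r *m P *m r) = r *m N *m r.
  apply: sqrtmx_eq; first by rewrite -{1}hr; apply/psd_congr/pd_psd.
  rewrite !mulmxA -(mulmxA _ r r) rr -eR !mulmxA -(mulmxA _ N M) NM mulmx1.
  by rewrite -(mulmxA _ M N) MN mulmx1.
have [K eK] : {K | G *m N = K} by exists (G *m N).
have Kpsd : psdmx K.
  have -> : K = adj N *m (M *m G) *m N.
    by rewrite -eK hN !mulmxA NM mul1mx.
  apply: psd_congr; rewrite MG.
  apply: psd_add; apply: psd_scale => //; first exact: pd_psd.
  exact/psd_congr/pd_psd/pd1.
have s2 : sqrtmx (r *m Q *m r) = r *m K *m r.
  apply: sqrtmx_eq; first by rewrite -{1}hr; apply/psd_congr.
  rewrite !mulmxA -(mulmxA _ r r) rr -eR -eK !mulmxA.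
  rewrite -(mulmxA _ N M) NM mulmx1.
  rewrite -(mulmxA _ M G) -GM mulmxA -(mulmxA _ M N) MN mulmx1.
  by rewrite -(mulmxA r G P) -(mulmxA r (G *m P) G) GPG.
have iR : invmx Rm = ri *m ri.
  apply: inv_eq; rewrite ?pd_unit // -rr mulmxA -(mulmxA r r).
  by rewrite rV mulmx1 rV.
have lhs : gen_fidelity Rm P Q = \tr (G *m P).
  rewrite /gen_fidelity er s1 s2 iR !mulmxA -(mulmxA _ r ri) rV.
  rewrite mulmx1 -(mulmxA _ ri r) Vr mulmx1.
  rewrite mxtrace_mulC !mulmxA rr -eR -eK !mulmxA -(mulmxA _ M N) MN mulmx1.
  rewrite mxtrace_mulC !mulmxA NM mul1mx.
  by rewrite mxtrace_mulC.
have [p ep] : {p | sqrtmx P = p} by exists (sqrtmx P).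
have [pp ppP] := sqrtmx_spec (pd_psd Pp); rewrite ep in pp ppP.
have hp : adj p = p := proj1 pp.
have s3 : sqrtmx (p *m Q *m p) = p *m G *m p.
  apply: sqrtmx_eq; first by rewrite -{1}hp; apply/psd_congr/pd_psd.
  rewrite !mulmxA -(mulmxA _ p p) ppP -(mulmxA _ P G) -(mulmxA _ G (P *m G)).
  by rewrite (mulmxA G P G) GPG.
rewrite bw lhs /uhlmann_fidelity ep s3 [RHS]mxtrace_mulC mulmxA ppP.
exact: mxtrace_mulC.
Qed.

End Lib.

Theorem mainTheorem4 (R : rcfType) (d : nat) (P Q : 'M[R[i]]_d) (t : R) :
  pdmx P -> pdmx Q -> 0 <= t -> t <= 1 ->
  gen_fidelity (bw_geodesic P Q t) P Q = uhlmann_fidelity P Q.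
Proof. exact: main_lemma. Qed.
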